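(* Let $V$ be a finite set and let $(V,G)$ be an association scheme with identity relation $1=\{(v,v)\mid v\in V\}$. Let $\equiv_G$ denote the equivalence relation on $V\times V$ whose classes are the relations in $G$. Let $\mathcal{P}_1=\{V\}$, $\mathcal{P}_2=G\setminus\{1\}$, and let $\mathcal{P}_3$ be the partition of $V^{(3)}$ such that $(u_1,u_2,u_3)$ and $(v_1,v_2,v_3)$ lie in the same class if and only if $(u_1,u_2)\equiv_G(v_1,v_2)$, $(u_1,u_3)\equiv_G(v_1,v_3)$ and $(u_2,u_3)\equiv_G(v_2,v_3)$. Then $\{\mathcal{P}_1,\mathcal{P}_2,\mathcal{P}_3\}$ is a $3$-scheme on $V$.
   Context: For a finite set $V$ and $s\geq1$, let $V^{(s)}$ be the set of $s$-tuples of pairwise distinct elements of $V$. For $s>1$ and $1\leq i\leq s$, $\pi^s_i:V^{(s)}\to V^{(s-1)}$ deletes the $i$-th coordinate. $\mathrm{Symm}_s$ acts on $V^{(s)}$ by $(v_1,\dots,v_s)^\tau=(v_{1^\tau},\dots,v_{s^\tau})$. An $m$-collection on $V$ is a set $\{\mathcal{P}_1,\dots,\mathcal{P}_m\}$ where $\mathcal{P}_s$ is a partition of $V^{(s)}$ (classes are called colors). It is an $m$-scheme if for every $1<s\leq m$: (compatibility) whenever $\bar u,\bar v$ lie in the same color of $\mathcal{P}_s$, for every $i$ the tuples $\pi^s_i(\bar u),\pi^s_i(\bar v)$ lie in the same color of $\mathcal{P}_{s-1}$; (regularity) whenever $\bar u,\bar v$ lie in the same color of $\mathcal{P}_{s-1}$,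 for every $1\leq i\leq s$ and every $P\in\mathcal{P}_s$, $\#\{\bar u'\in P\mid \pi^s_i(\bar u')=\bar u\}=\#\{\bar v'\in P\mid\pi^s_i(\bar v')=\bar v\}$; (invariance) for every $P\in\mathcal{P}_s$ and $\tau\in\mathrm{Symm}_s$, $\{\bar v^\tau\mid\bar v\in P\}\in\mathcal{P}_s$. An association scheme is a pair $(X,G)$ with $X$ finite and $G$ a partition of $X\times X$ containing the identity relation, closed under $g\mapsto\{(y,x)\mid(x,y)\in g\}$, and such that for all $f,g,h\in G$ the number $\#\{\gamma\mid(\alpha,\gamma)\in f,(\gamma,\beta)\in g\}$ is the same for all $(\alpha,\beta)\in h$. *)

(* Defs.v *)
From mathcomp Require Import all_boot fingroup perm.
Set Implicit Arguments. Unset Strict Implicit. Unset Printing Implicit Defensive.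

Section Defs.
Variable V : finType.

Definition distinct_tuples (s : nat) : {set s.-tuple V} := [set t : s.-tuple V | uniq t].

Definition del_coord (s : nat) (i : 'I_s.+1) (t : s.+1.-tuple V) : s.-tuple V :=
  [tuple tnth t (lift i j) | j < s].

Definition tuple_act (s : nat) (t : s.-tuple V) (tau : 'S_s) : s.-tuple V :=
  [tuple tnth t (tau j) | j < s].

(* an m-collection: a partition P s of V^(s) for every 1 <= s <= m *)
Definition collection := forall s : nat, {set {set s.-tuple V}}.

Definition same_color (s : nat) (P : {set {set s.-tuple V}}) (u v : s.-tuple V) : Prop :=
  exists2 Q, Q \in P & (u \in Q) && (v \in Q).

Definition is_m_scheme (m : nat) (P : collection) : Prop :=
  (forall s, 1 <= s <= m -> partition (P s) (distinct_tuples s)) /\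
  (forall s, 1 <= s -> s.+1 <= m ->
     (forall (u v : s.+1.-tuple V), same_color (P s.+1) u v ->
        forall i : 'I_s.+1, same_color (P s) (del_coord i u) (del_coord i v)) /\
     (forall (u v : s.-tuple V), same_color (P s) u v ->
        forall (i : 'I_s.+1) (Q : {set s.+1.-tuple V}), Q \in P s.+1 ->
          #|[set u' in Q | del_coord i u' == u]| = #|[set v' in Q | del_coord i v' == v]|) /\
     (forall (Q : {set s.+1.-tuple V}) (tau : 'S_s.+1), Q \in P s.+1 ->
        [set tuple_act t tau | t in Q] \in P s.+1)).

Definition id_rel : {set V * V} := [set x | x.1 == x.2].
Definition transp_rel (g : {set V * V}) : {set V * V} := [set (x.2, x.1) | x in g].

Definition is_assoc_scheme (G : {set {set V * V}}) : Prop :=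
  partition G [set: V * V] /\
  id_rel \in G /\
  (forall g, g \in G -> transp_rel g \in G) /\
  (forall f g h, f \in G -> g \in G -> h \in G ->
     forall a b a' b', (a, b) \in h -> (a', b') \in h ->
       #|[set c | ((a, c) \in f) && ((c, b) \in g)]| =
       #|[set c | ((a', c) \in f) && ((c, b') \in g)]|).

Definition equivG (G : {set {set V * V}}) (x y : V * V) : bool :=
  [exists g in G, (x \in g) && (y \in g)].


Definition rel_to_tuples (g : {set V * V}) : {set 2.-tuple V} :=
  [set t : 2.-tuple V | (tnth t ord0, tnth t ord_max) \in g].

Definition P1 : {set {set 1.-tuple V}} := [set distinct_tuples 1].
Definition P2 (G : {set {set V * V}}) : {set {set 2.-tuple V}} :=
  [set rel_to_tuples g | g in G :\ id_rel].

Definition pr3 (t : 3.-tuple V) (i j : nat) (Hi : i < 3) (Hj : j < 3) : V * V :=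
  (tnth t (Ordinal Hi), tnth t (Ordinal Hj)).

Definition same3 (G : {set {set V * V}}) (u v : 3.-tuple V) : bool :=
  [&& equivG G (pr3 u (isT : 0 < 3) (isT : 1 < 3)) (pr3 v (isT : 0 < 3) (isT : 1 < 3)),
      equivG G (pr3 u (isT : 0 < 3) (isT : 2 < 3)) (pr3 v (isT : 0 < 3) (isT : 2 < 3)) &
      equivG G (pr3 u (isT : 1 < 3) (isT : 2 < 3)) (pr3 v (isT : 1 < 3) (isT : 2 < 3))].

Definition class3 (G : {set {set V * V}}) (u : 3.-tuple V) : {set 3.-tuple V} :=
  [set v in distinct_tuples 3 | same3 G u v].

Definition P3 (G : {set {set V * V}}) : {set {set 3.-tuple V}} :=
  [set class3 G u | u in distinct_tuples 3].

Definition coll_of_assoc (G : {set {set V * V}}) : collection :=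
  fun s => match s as n return {set {set n.-tuple V}} with
           | 1 => P1 | 2 => P2 G | 3 => P3 G | _ => set0 end.

End Defs.

(* Main.v *)
Require Import Defs.
From mathcomp Require Import all_boot fingroup perm.
Set Implicit Arguments. Unset Strict Implicit. Unset Printing Implicit Defensive.

Definition cl (V : finType) (G : {set {set V * V}}) (x : V * V) := pblock G x.

Lemma cl_mem (V : finType) (G : {set {set V * V}}) x :
  partition G [set: V * V] -> cl G x \in G.
Proof. by case/and3P => /eqP Hc _ _; apply: pblock_mem; rewrite Hc inE. Qed.

Lemma mem_cl (V : finType) (G : {set {set V * V}}) x :
  partition G [set: V * V] -> x \in cl G x.
Proof. by case/and3P => /eqP Hc _ _; rewrite /cl mem_pblock Hc inE. Qed.

Lemma cl_uniq (V : finType) (G : {set {set V * V}}) x g :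
  partition G [set: V * V] -> g \in G -> x \in g -> cl G x = g.
Proof. by case/and3P => _ Ht _ Hg Hx; apply: def_pblock. Qed.

Lemma in_transp (V : finType) (g : {set V * V}) a b :
  ((a, b) \in transp_rel g) = ((b, a) \in g).
Proof.
apply/imsetP/idP => [[[x y] Hxy [-> ->]] //| H]; by exists (b, a).
Qed.

Lemma cl_swap (V : finType) (G : {set {set V * V}}) x y :
  is_assoc_scheme G -> cl G (y, x) = transp_rel (cl G (x, y)).
Proof.
case=> HG [Hid [Htr _]]; apply: cl_uniq => //; first by apply: Htr; apply: cl_mem.
by rewrite in_transp; apply: mem_cl.
Qed.

Lemma cl_id (V : finType) (G : {set {set V * V}}) x y :
  is_assoc_scheme G -> (cl G (x, y) == id_rel V) = (x == y).
Proof.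
case=> HG [Hid _]; apply/eqP/eqP => [H| ->].
  by move: (mem_cl (x, y) HG); rewrite H inE => /eqP.
by apply: cl_uniq => //; rewrite inE.
Qed.

Lemma equivG_cl (V : finType) (G : {set {set V * V}}) x y :
  partition G [set: V * V] -> equivG G x y = (cl G x == cl G y).
Proof.
move=> HG; apply/existsP/eqP => [[g /and3P [Hg Hx Hy]]| H].
  by rewrite (cl_uniq HG Hg Hx) (cl_uniq HG Hg Hy).
exists (cl G x); rewrite cl_mem // mem_cl // H mem_cl //.
Qed.

Lemma I2P (k : 'I_2) : k = ord0 \/ k = ord_max.
Proof. by case: k => [[|[|]]] // Hk; [left|right]; apply: val_inj. Qed.

Lemma I3P (k : 'I_3) : [\/ k = Ordinal (isT : 0 < 3), k = Ordinal (isT : 1 < 3) | k = Ordinal (isT : 2 < 3)].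
Proof. by case: k => [[|[|[|]]]] // Hk; [apply: Or31|apply: Or32|apply: Or33]; apply: val_inj. Qed.
Definition key3 (V : finType) (G : {set {set V * V}}) (t : 3.-tuple V) :=
  [ffun ab : 'I_3 * 'I_3 => cl G (tnth t ab.1, tnth t ab.2)].

Lemma cl_diag (V : finType) (G : {set {set V * V}}) x :
  is_assoc_scheme G -> cl G (x, x) = id_rel V.
Proof. by move=> HA; apply/eqP; rewrite cl_id. Qed.

Lemma same3_key (V : finType) (G : {set {set V * V}}) u v :
  is_assoc_scheme G -> same3 G u v = (key3 G u == key3 G v).
Proof.
move=> HA; have HG := HA.1.
rewrite /same3 /pr3 !equivG_cl //; apply/and3P/eqP => [[/eqP H01 /eqP H02 /eqP H12]|H].
  apply/ffunP => [[a b]]; rewrite !ffunE /=.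
  case: (I3P a) => ->; case: (I3P b) => ->;
    rewrite ?cl_diag // ?H01 ?H02 ?H12 // (cl_swap _ _ HA) ?H01 ?H02 ?H12 -?(cl_swap _ _ HA) //.
have E a b : cl G (tnth u a, tnth u b) = cl G (tnth v a, tnth v b).
  by move/ffunP: H => /(_ (a, b)); rewrite !ffunE.
by rewrite !E.
Qed.
Lemma uniq_key (V : finType) (G : {set {set V * V}}) (w t : 3.-tuple V) :
  is_assoc_scheme G -> uniq w -> key3 G w = key3 G t -> uniq t.
Proof.
move=> HA /tuple_uniqP Hw H; apply/tuple_uniqP => a b Heq; apply: Hw.
move/ffunP: H => /(_ (a, b)); rewrite !ffunE /= Heq cl_diag // => /eqP.
by rewrite cl_id // => /eqP.
Qed.

Lemma in_class3 (V : finType) (G : {set {set V * V}}) (w t : 3.-tuple V) :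
  is_assoc_scheme G -> uniq w -> (t \in class3 G w) = (key3 G w == key3 G t).
Proof.
move=> HA Hw; rewrite /class3 !inE same3_key //; apply/andP/idP => [[]//|H].
by split => //; apply: uniq_key HA Hw (eqP H).
Qed.

Lemma P3_part (V : finType) (G : {set {set V * V}}) :
  is_assoc_scheme G -> partition (P3 G) (distinct_tuples V 3).
Proof.
move=> HA; have -> : P3 G = preim_partition (key3 G) (distinct_tuples V 3).
  rewrite /P3 /preim_partition /equivalence_partition; apply: eq_imset => u.
  by apply/setP => t; rewrite /class3 !inE same3_key.
exact: preim_partitionP.
Qed.

Lemma uniq2 (V : finType) (t : 2.-tuple V) : uniq t = (tnth t ord0 != tnth t ord_max).
Proof. by case: t => [[|a [|b [|c s]]] Hs] //; rewrite /tnth /= inE andbT. Qed.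

Lemma tnth2_0 (V : finType) (a b : V) : tnth [tuple a; b] ord0 = a. Proof. by []. Qed.
Lemma tnth2_1 (V : finType) (a b : V) : tnth [tuple a; b] ord_max = b. Proof. by []. Qed.

Lemma inhab (V : finType) (G : {set {set V * V}}) : is_assoc_scheme G -> exists x : V, True.
Proof.
case=> /and3P [_ _ H0] [Hid _].
have : id_rel V != set0 by apply: contraNneq H0 => <-.
by case/set0Pn => x _; exists x.1.
Qed.

Lemma P1_part (V : finType) (G : {set {set V * V}}) :
  is_assoc_scheme G -> partition (P1 V) (distinct_tuples V 1).
Proof.
move=> HA; have [x _] := inhab HA.
apply/and3P; split.
- by rewrite /cover /P1 big_set1.
- by rewrite /P1 trivIset1.
- rewrite /P1 inE eq_sym; apply/set0Pn; exists [tuple x]; by rewrite inE.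
Qed.

Lemma P2_part (V : finType) (G : {set {set V * V}}) :
  is_assoc_scheme G -> partition (P2 G) (distinct_tuples V 2).
Proof.
move=> HA; have HG := HA.1; have [Hid _] := HA.2.
apply/and3P; split.
- apply/eqP/setP => t; rewrite inE uniq2; apply/bigcupP/idP.
    case=> B /imsetP [g]; rewrite !inE => /andP [Hng Hg] -> ; rewrite inE => Ht.
    by rewrite -(cl_id _ _ HA) (cl_uniq HG Hg Ht).
  move=> Ht; exists (rel_to_tuples (cl G (tnth t ord0, tnth t ord_max))).
    by apply/imsetP; exists (cl G (tnth t ord0, tnth t ord_max)) => //; rewrite !inE cl_id // Ht cl_mem.
  by rewrite inE mem_cl.
- apply/trivIsetP => A B /imsetP [g Hg ->] /imsetP [h Hh ->] Hne.
  rewrite disjoints_subset; apply/subsetP => t; rewrite !inE => Hg'; apply/negP => Hh'; move: Hne.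
  move: Hg Hh; rewrite !inE => /andP [_ Hg] /andP [_ Hh].
  by rewrite -(cl_uniq HG Hg Hg') -(cl_uniq HG Hh Hh') eqxx.
- apply/imsetP => [[g]]; rewrite !inE => /andP [Hng Hg] E.
  have Hg0 : g != set0 by apply: contraTneq Hg => ->; case/and3P: HG.
  case/set0Pn: Hg0 => [[a b] Hab].
  have : [tuple a; b] \in rel_to_tuples g by rewrite inE.
  by rewrite -E inE.
Qed.
Definition ins (V : finType) s (i : 'I_s.+1) (u : s.-tuple V) (c : V) : s.+1.-tuple V :=
  [tuple if unlift i j is Some k then tnth u k else c | j < s.+1].

Lemma ins_i (V : finType) s (i : 'I_s.+1) (u : s.-tuple V) c : tnth (ins i u c) i = c.
Proof. by rewrite tnth_mktuple unlift_none. Qed.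

Lemma ins_lift (V : finType) s (i : 'I_s.+1) (u : s.-tuple V) c k :
  tnth (ins i u c) (lift i k) = tnth u k.
Proof. by rewrite tnth_mktuple liftK. Qed.

Lemma del_ins (V : finType) s (i : 'I_s.+1) (u : s.-tuple V) c : del_coord i (ins i u c) = u.
Proof. by apply: eq_from_tnth => j; rewrite tnth_mktuple ins_lift. Qed.

Lemma del_eq (V : finType) s (i : 'I_s.+1) (u : s.-tuple V) t :
  del_coord i t = u -> t = ins i u (tnth t i).
Proof.
move=> H; apply: eq_from_tnth => j; case: (unliftP i j) => [k ->|->].
  by rewrite ins_lift -H tnth_mktuple.
by rewrite ins_i.
Qed.

Lemma card_del (V : finType) s (i : 'I_s.+1) (u : s.-tuple V) (Q : {set s.+1.-tuple V}) :
  #|[set u' in Q | del_coord i u' == u]| = #|[set c | ins i u c \in Q]|.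
Proof.
have -> : [set u' in Q | del_coord i u' == u] = ins i u @: [set c | ins i u c \in Q].
  apply/setP => t; rewrite inE; apply/andP/imsetP => [[HQ /eqP Hd]|[c Hc ->]].
    by exists (tnth t i); rewrite ?inE -(del_eq Hd).
  by rewrite inE in Hc; rewrite Hc del_ins.
rewrite card_imset // => c d E; by rewrite -(ins_i i u c) E ins_i.
Qed.
Lemma val_out (V : finType) (G : {set {set V * V}}) g x y :
  is_assoc_scheme G -> g \in G -> #|[set c | (x, c) \in g]| = #|[set c | (y, c) \in g]|.
Proof.
case=> HG [Hid [Htr Hint]] Hg.
have := Hint g (transp_rel g) (id_rel V) Hg (Htr _ Hg) Hid x x y y.
rewrite !inE !eqxx => /(_ isT isT).
have E z : [set c | ((z, c) \in g) && ((c, z) \in transp_rel g)] = [set c | (z, c) \in g].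
  by apply/setP => c; rewrite !inE in_transp andbb.
by rewrite !E.
Qed.

Lemma val_in (V : finType) (G : {set {set V * V}}) g x y :
  is_assoc_scheme G -> g \in G -> #|[set c | (c, x) \in g]| = #|[set c | (c, y) \in g]|.
Proof.
case=> HG [Hid [Htr Hint]] Hg.
have := Hint (transp_rel g) g (id_rel V) (Htr _ Hg) Hg Hid x x y y.
rewrite !inE !eqxx => /(_ isT isT).
have E z : [set c | ((z, c) \in transp_rel g) && ((c, z) \in g)] = [set c | (c, z) \in g].
  by apply/setP => c; rewrite !inE in_transp andbb.
by rewrite !E.
Qed.

Lemma reg1 (V : finType) (G : {set {set V * V}}) (u v : 1.-tuple V) (i : 'I_2) Q :
  is_assoc_scheme G -> Q \in P2 G ->
  #|[set u' in Q | del_coord i u' == u]| = #|[set v' in Q | del_coord i v' == v]|.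
Proof.
move=> HA /imsetP [g]; rewrite !inE => /andP [_ Hg] ->; rewrite !card_del.
case: (I2P i) => ->.
- have E : (ord_max : 'I_2) = lift ord0 ord0 by apply: val_inj.
  have S w : [set c | ins ord0 w c \in rel_to_tuples g] = [set c | (c, tnth w ord0) \in g].
    by apply/setP => c; rewrite !inE E ins_i ins_lift.
  rewrite !S.
  exact: val_in HA Hg.
- have E : (ord0 : 'I_2) = lift ord_max ord0 by apply: val_inj.
  have S w : [set c | ins ord_max w c \in rel_to_tuples g] = [set c | (tnth w ord0, c) \in g].
    by apply/setP => c; rewrite !inE [in X in (tnth _ X, _)]E ins_i ins_lift.
  rewrite !S.
  exact: val_out HA Hg.
Qed.
Lemma cl_eq_in (V : finType) (G : {set {set V * V}}) A x :
  partition G [set: V * V] -> A \in G -> (cl G x == A) = (x \in A).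
Proof.
move=> HG HAm; apply/eqP/idP => [<-|]; first exact: mem_cl.
exact: cl_uniq.
Qed.

Lemma key_ins (V : finType) (G : {set {set V * V}}) (w : 3.-tuple V) (i : 'I_3) (x : 2.-tuple V) c :
  is_assoc_scheme G ->
  (key3 G w == key3 G (ins i x c)) =
  [&& cl G (tnth x ord0, tnth x ord_max) == cl G (tnth w (lift i ord0), tnth w (lift i ord_max)),
      cl G (c, tnth x ord0) == cl G (tnth w i, tnth w (lift i ord0)) &
      cl G (c, tnth x ord_max) == cl G (tnth w i, tnth w (lift i ord_max))].
Proof.
move=> HA; apply/eqP/and3P => [H|[/eqP H01 /eqP H0 /eqP H1]].
  have K a b : cl G (tnth w a, tnth w b) = cl G (tnth (ins i x c) a, tnth (ins i x c) b).
    by move/ffunP: H => /(_ (a, b)); rewrite !ffunE.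
  by rewrite !K !ins_i !ins_lift !eqxx.
have H2 k k' : cl G (tnth w (lift i k), tnth w (lift i k')) = cl G (tnth x k, tnth x k').
  case: (I2P k) => ->; case: (I2P k') => ->; rewrite ?cl_diag // -?H01 //.
  by rewrite (cl_swap _ _ HA) -H01 -(cl_swap _ _ HA).
have H1' k : cl G (tnth w i, tnth w (lift i k)) = cl G (c, tnth x k).
  by case: (I2P k) => ->; rewrite ?H0 ?H1.
apply/ffunP => [[a b]]; rewrite !ffunE /=.
case: (unliftP i a) => [ka ->|->]; case: (unliftP i b) => [kb ->|->];
  rewrite ?ins_i ?ins_lift ?cl_diag //.
by rewrite (cl_swap _ _ HA) H1' -(cl_swap _ _ HA).
Qed.
Lemma reg2 (V : finType) (G : {set {set V * V}}) (u v : 2.-tuple V) (i : 'I_3) Q :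
  is_assoc_scheme G -> same_color (P2 G) u v -> Q \in P3 G ->
  #|[set u' in Q | del_coord i u' == u]| = #|[set v' in Q | del_coord i v' == v]|.
Proof.
move=> HA [Q' /imsetP [g]]; rewrite !inE => /andP [_ Hg] -> /andP [].
rewrite !inE => Hu Hv /imsetP [w]; rewrite inE => Hw ->; rewrite !card_del.
have HG := HA.1; have [Hid [Htr Hint]] := HA.2.
set A0 := cl G (tnth w i, tnth w (lift i ord0)).
set A1 := cl G (tnth w i, tnth w (lift i ord_max)).
set B := cl G (tnth w (lift i ord0), tnth w (lift i ord_max)).
have S (x : 2.-tuple V) : [set c | ins i x c \in class3 G w] =
   if cl G (tnth x ord0, tnth x ord_max) == B then
     [set c | ((tnth x ord0, c) \in transp_rel A0) && ((c, tnth x ord_max) \in A1)]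
   else set0.
  apply/setP => c; rewrite [in LHS]in_set in_class3 // key_ins //.
  case: eqP => _ /=; last by rewrite inE.
  rewrite in_set in_transp -!(cl_eq_in _ HG) //; exact: cl_mem.
rewrite !S (cl_uniq HG Hg Hu) (cl_uniq HG Hg Hv); case: eqP => // _.
by apply: (Hint _ _ g) => //; [apply: Htr; exact: cl_mem | exact: cl_mem].
Qed.
Lemma uniq1 (V : finType) (t : 1.-tuple V) : uniq t.
Proof. by case: t => [[|a [|b s]] Hs]. Qed.

Lemma comp1 (V : finType) (G : {set {set V * V}}) (u v : 2.-tuple V) (i : 'I_2) :
  same_color (P1 V) (del_coord i u) (del_coord i v).
Proof. by exists (distinct_tuples V 1); rewrite ?inE ?uniq1. Qed.

Lemma comp2 (V : finType) (G : {set {set V * V}}) (u v : 3.-tuple V) (i : 'I_3) :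
  is_assoc_scheme G -> same_color (P3 G) u v ->
  same_color (P2 G) (del_coord i u) (del_coord i v).
Proof.
move=> HA [Q /imsetP [w]]; rewrite inE => Hw -> /andP [Hu Hv].
have HG := HA.1.
have Hu' : uniq u by move: Hu; rewrite !inE => /andP [].
move: Hu Hv; rewrite !in_class3 // => /eqP Hu /eqP Hv.
have K a b : cl G (tnth u a, tnth u b) = cl G (tnth v a, tnth v b).
  move/ffunP: Hu => /(_ (a, b)); move/ffunP: Hv => /(_ (a, b)); rewrite !ffunE /= => -> ->.
  done.
exists (rel_to_tuples (cl G (tnth u (lift i ord0), tnth u (lift i ord_max)))).
  apply/imsetP; eexists; last reflexivity; rewrite !inE cl_mem // andbT cl_id //.
  move/tuple_uniqP: Hu' => Hinj; apply/negP => /eqP /Hinj /lift_inj //.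
by rewrite !inE !tnth_mktuple (mem_cl _ HG) K (mem_cl _ HG).
Qed.
Lemma act_tnth (V : finType) s (t : s.-tuple V) (tau : 'S_s) j :
  tnth (tuple_act t tau) j = tnth t (tau j).
Proof. exact: tnth_mktuple. Qed.

Lemma act_comp (V : finType) s (t : s.-tuple V) (r p : 'S_s) :
  tuple_act (tuple_act t p) r = tuple_act t (r * p)%g.
Proof. by apply: eq_from_tnth => j; rewrite !act_tnth permM. Qed.

Lemma act1 (V : finType) s (t : s.-tuple V) : tuple_act t 1 = t.
Proof. by apply: eq_from_tnth => j; rewrite act_tnth perm1. Qed.

Lemma image_act (V : finType) s (Q : {set s.-tuple V}) (tau : 'S_s) :
  [set tuple_act t tau | t in Q] = [set t | tuple_act t (tau^-1)%g \in Q].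
Proof.
apply/setP => t; rewrite inE; apply/imsetP/idP => [[t0 Ht0 ->]|H].
  by rewrite act_comp mulVg act1.
by exists (tuple_act t (tau^-1)%g) => //; rewrite act_comp mulgV act1.
Qed.

Lemma transpK (V : finType) (g : {set V * V}) : transp_rel (transp_rel g) = g.
Proof. by apply/setP => [[a b]]; rewrite !in_transp. Qed.

Lemma transp_id (V : finType) : transp_rel (id_rel V) = id_rel V.
Proof. by apply/setP => [[a b]]; rewrite in_transp !inE eq_sym. Qed.

Lemma inv2 (V : finType) (G : {set {set V * V}}) (Q : {set 2.-tuple V}) (tau : 'S_2) :
  is_assoc_scheme G -> Q \in P2 G -> [set tuple_act t tau | t in Q] \in P2 G.
Proof.
move=> HA /imsetP [g]; rewrite !inE => /andP [Hng Hg] ->.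
have [Hid [Htr _]] := HA.2.
rewrite image_act; set s := (tau^-1)%g.
have Hs : s ord0 != s ord_max by rewrite (inj_eq perm_inj).
case: (I2P (s ord0)) => H0; case: (I2P (s ord_max)) => H1; rewrite H0 H1 in Hs => //.
  have -> : [set t | tuple_act t s \in rel_to_tuples g] = rel_to_tuples g.
    by apply/setP => t; rewrite !inE !act_tnth H0 H1.
  by apply: imset_f; rewrite !inE Hng Hg.
have -> : [set t | tuple_act t s \in rel_to_tuples g] = rel_to_tuples (transp_rel g).
  by apply/setP => t; rewrite !inE !act_tnth H0 H1 in_transp.
apply: imset_f; rewrite !inE Htr // andbT.
by apply: contra Hng => /eqP E; rewrite -(transpK g) E transp_id.
Qed.
Lemma inv3 (V : finType) (G : {set {set V * V}}) (Q : {set 3.-tuple V}) (tau : 'S_3) :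
  is_assoc_scheme G -> Q \in P3 G -> [set tuple_act t tau | t in Q] \in P3 G.
Proof.
move=> HA /imsetP [w]; rewrite inE => Hw ->.
have Hw' : uniq (tuple_act w tau).
  apply/tuple_uniqP => a b; rewrite !act_tnth => /(tuple_uniqP _ Hw) /perm_inj //.
rewrite image_act; have -> : [set t | tuple_act t (tau^-1)%g \in class3 G w] = class3 G (tuple_act w tau).
  apply/setP => t; rewrite inE !in_class3 //; apply/eqP/eqP => /ffunP H; apply/ffunP => [[a b]].
    by move: (H ((tau a), (tau b))); rewrite !ffunE /= !act_tnth !permK.
  by move: (H (((tau^-1)%g a), ((tau^-1)%g b))); rewrite !ffunE /= !act_tnth !permKV.
by apply: imset_f; rewrite inE.
Qed.

Theorem lemma2p4 (V : finType) (G : {set {set V * V}}) :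
  is_assoc_scheme G -> is_m_scheme 3 (coll_of_assoc G).
Proof.
move=> HA; split.
  case=> [|[|[|[|s]]]] //= _.
  - exact: P1_part HA.
  - exact: P2_part HA.
  - exact: P3_part HA.
move=> [|[|[|s]]] //= _ _; (split; [|split]).
- move=> u v _ i; exact: (comp1 G).
- move=> u v _ i Q HQ; exact: reg1 HA HQ.
- move=> Q tau HQ; exact: inv2 HA HQ.
- move=> u v Huv i; exact: comp2 HA Huv.
- move=> u v Huv i Q HQ; exact: reg2 HA Huv HQ.
- move=> Q tau HQ; exact: inv3 HA HQ.
Qed.
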